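(* Every 3-colourable finite graph is 101-colourable.
   Context: A finite simple undirected graph is 101-colourable if there is an assignment of a value in $\{0,1\}$ to each vertex such that (i) no two adjacent vertices are both assigned $0$, and (ii) no triangle (3-clique) has all three vertices assigned $1$. *)

(* Defs.v *)
From mathcomp Require Import all_boot.
Set Implicit Arguments. Unset Strict Implicit. Unset Printing Implicit Defensive.

Definition simple_graph (V : finType) (e : rel V) : Prop :=
  symmetric e /\ irreflexive e.

Definition colourable (k : nat) (V : finType) (e : rel V) : Prop :=
  exists c : V -> 'I_k, forall x y, e x y -> c x != c y.

(* 101-colourable: a 0/1 assignment such that (i) no two adjacent vertices
   are both 0, and (ii) no triangle has all three vertices 1. *)
Definition colourable101 (V : finType) (e : rel V) : Prop :=
  exists f : V -> bool,
    (forall x y, e x y -> f x || f y) /\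
    (forall x y z, e x y -> e y z -> e x z -> ~~ [&& f x, f y & f z]).

(* Main.v *)
Require Import Defs.
From mathcomp Require Import all_boot.

Theorem mainTheorem3 (V : finType) (e : rel V) :
  simple_graph e -> colourable 3 e -> colourable101 e.
Proof.
move=> _ [c Hc].
exists (fun x => nat_of_ord (c x) != 0); split.
- move=> x y /Hc; case: (c x) => [[|a] Ha]; case: (c y) => [[|b] Hb] //=.
- move=> x y z /Hc Hxy /Hc Hyz /Hc Hxz.
  move: Hxy Hyz Hxz.
  case: (c x) => [[|[|[|a]]] Ha]; case: (c y) => [[|[|[|b]]] Hb];
    case: (c z) => [[|[|[|d]]] Hd] //=.
Qed.
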